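(* Let $\mathcal O$ be a non-degenerate conic of $\mathrm{PG}(2,q^2)$ and $\bar L\in\ell_\infty$ a point not on $\mathcal O$. Then in $\mathrm{PG}(4,q^2)$ the extended spread line $[L]^\star$ is disjoint from $[\mathcal O]^\star=\mathcal Q_\infty^\star\cap\mathcal Q_0^\star$.
   Context: Bruck–Bose setting with coordinates: $\tau$ primitive in $\mathbb F_{q^2}$ with minimal polynomial $x^2-t_1x-t_0$ over $\mathbb F_q$; $\ell_\infty: z=0$ in $\mathrm{PG}(2,q^2)$; $\Sigma_\infty: z=0$ in $\mathrm{PG}(4,q)$ with coordinates $(x_0,x_1,y_0,y_1,z)$. The affine point $(x_0+x_1\tau,y_0+y_1\tau,z)$ maps to $(x_0,x_1,y_0,y_1,z)$, and $\bar T=(\delta,1,0)\in\ell_\infty$, $\delta=d_0+d_1\tau$, to the spread line $[T]=\langle(d_0,d_1,1,0,0),(t_0d_1,d_0+t_1d_1,0,1,0)\rangle$ (and $(1,0,0)$ to $\langle(1,0,0,0,0),(0,1,0,0,0)\rangle$). If $\mathcal O$ has equation $f(x,y,z)=0$, substituting $x=x_0+x_1\tau$, $y=y_0+y_1\tau$ and reducing with $\tau^2=t_1\tau+t_0$ gives $f=f_\infty+\tau f_0$ with $f_\infty,f_0$ homogeneous quadratics over $\mathbb F_q$; $\mathcal Q_\infty,\mathcal Q_0$ are the quadrics $f_\infty=0$, $f_0=0$ of $\mathrm{PG}(4,q)$, and $\mathcal V^\star$ denotes the set of points of $\mathrm{PG}(4,q^2)$ satisfying the equations defining $\mathcal V$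 (for a line, its extension to a line of $\mathrm{PG}(4,q^2)$). *)

(* Defs.v *)
From HB Require Import structures.
From mathcomp Require Import all_boot all_order all_algebra all_field.
Set Implicit Arguments. Unset Strict Implicit. Unset Printing Implicit Defensive.
Import GRing.Theory.
Local Open Scope ring_scope.

(* A homogeneous quadratic form in n variables, given by its coefficients
   c i j (i <= j) of the monomials v_i v_j; entries with i > j are ignored. *)
Definition qform (R : pzRingType) (n : nat) (c : 'I_n -> 'I_n -> R)
  (v : 'rV[R]_n) : R :=
  \sum_(i < n) \sum_(j < n | (i <= j)%N) c i j * v 0 i * v 0 j.

(* Non-degenerate (non-singular) conic/quadric: no singular point, i.e. no
   nonzero v with Q(v) = 0 lying in the radical of the polar form. *)
Definition nonsingular_qform (R : pzRingType) (n : nat)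
  (c : 'I_n -> 'I_n -> R) : Prop :=
  forall v : 'rV[R]_n, v != 0 -> qform c v = 0 ->
    ~ (forall u : 'rV[R]_n, qform c (u + v) = qform c u + qform c v).

Definition in_Fq (R : pzRingType) (q : nat) (x : R) : Prop := x ^+ q = x.

Definition Fq_coeffs (R : pzRingType) (q n : nat) (c : 'I_n -> 'I_n -> R) : Prop :=
  forall i j : 'I_n, (i <= j)%N -> in_Fq q (c i j).

Definition vec3 (R : pzRingType) (a b c : R) : 'rV[R]_3 :=
  \row_(k < 3) nth 0 [:: a; b; c] k.
Definition vec5 (R : pzRingType) (a b c d e : R) : 'rV[R]_5 :=
  \row_(k < 5) nth 0 [:: a; b; c; d; e] k.

Definition bb_sub (R : pzRingType) (tau : R) (x : 'rV[R]_5) : 'rV[R]_3 :=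
  vec3 (x 0 (inord 0) + x 0 (inord 1) * tau)
       (x 0 (inord 2) + x 0 (inord 3) * tau)
       (x 0 (inord 4)).

(* Generators of the spread line [T] for T = (d0 + d1 tau, 1, 0). *)
Definition spread_gen1 (R : pzRingType) (d0 d1 : R) : 'rV[R]_5 :=
  vec5 d0 d1 1 0 0.
Definition spread_gen2 (R : pzRingType) (t0 t1 d0 d1 : R) : 'rV[R]_5 :=
  vec5 (t0 * d1) (d0 + t1 * d1) 0 1 0.
(* Generators of the spread line for (1,0,0). *)
Definition spread_inf1 (R : pzRingType) : 'rV[R]_5 := vec5 1 0 0 0 0.
Definition spread_inf2 (R : pzRingType) : 'rV[R]_5 := vec5 0 1 0 0 0.

(* Extension to PG(4,q^2) of the line spanned by g1, g2 (as a set of vectors). *)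
Definition ext_line (R : pzRingType) (g1 g2 : 'rV[R]_5) (v : 'rV[R]_5) : Prop :=
  exists a b : R, v = a *: g1 + b *: g2.

Definition disjoint_from_QQ (R : pzRingType) (g1 g2 : 'rV[R]_5)
  (finf f0 : 'I_5 -> 'I_5 -> R) : Prop :=
  forall v : 'rV[R]_5, v != 0 -> ext_line g1 g2 v ->
    ~ (qform finf v = 0 /\ qform f0 v = 0).

(* Main.v *)
Require Import Defs.
From HB Require Import structures.
From mathcomp Require Import all_boot all_order all_algebra all_field.
From mathcomp Require Import ring zify.
Import GRing.Theory.
Local Open Scope ring_scope.

Lemma qform_scale (R : comPzRingType) n (c : 'I_n -> 'I_n -> R) s w :
  qform c (s *: w) = s ^+ 2 * qform c w.
Proof.
rewrite /qform mulr_sumr; apply: eq_bigr => i _.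
rewrite mulr_sumr; apply: eq_bigr => j _; rewrite !mxE; ring.
Qed.

Lemma key (E : fieldType) (q : nat) (tau : E) (f : 'I_3 -> 'I_3 -> E)
  (finf f0 : 'I_5 -> 'I_5 -> E) (g1 g2 : 'rV[E]_5) (w : 'rV[E]_3) :
  (forall x y : E, (x + y) ^+ q = x ^+ q + y ^+ q) -> (0 < q)%N ->
  tau ^+ q != tau -> Fq_coeffs q finf -> Fq_coeffs q f0 ->
  (forall x, qform f (bb_sub tau x) = qform finf x + tau * qform f0 x) ->
  (forall a b, bb_sub tau (a *: g1 + b *: g2) = (a + b * tau) *: w) ->
  map_mx (fun x => x ^+ q) g1 = g1 -> map_mx (fun x => x ^+ q) g2 = g2 ->
  qform f w != 0 ->
  disjoint_from_QQ g1 g2 finf f0.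
Proof.
move=> FD q0 Ftau hfi hf0 hf hb hg1 hg2 wn0.
set F := fun x : E => x ^+ q.
have F0 : F 0 = 0 by rewrite /F expr0n gtn_eqF.
have FN : forall x, F (- x) = - F x.
  move=> x; apply/eqP; rewrite -subr_eq0 opprK /F -FD addNr.
  by rewrite -/(F 0) F0.
have FM : forall x y, F (x * y) = F x * F y by move=> x y; rewrite /F exprMn.
have Fsum : forall (c : 'I_5 -> 'I_5 -> E), Fq_coeffs q c ->
    forall v, qform c (map_mx F v) = F (qform c v).
  move=> c hc v; rewrite /qform (big_morph F FD F0); apply: eq_bigr => i _.
  rewrite (big_morph F FD F0); apply: eq_bigr => j hij.
  by rewrite !mxE !FM [F (c i j)]hc.
have e1 : forall a b, qform finf (a *: g1 + b *: g2) = 0 ->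
    qform f0 (a *: g1 + b *: g2) = 0 -> a + b * tau = 0.
  move=> a b h1 h2; move: (hf (a *: g1 + b *: g2)).
  rewrite h1 h2 mulr0 addr0 hb qform_scale => /eqP.
  by rewrite mulf_eq0 (negbTE wn0) orbF expf_eq0 /= => /eqP.
move=> v vn0 [a [b hv]]; rewrite hv in vn0 *; move=> [h1 h2].
have hmap : map_mx F (a *: g1 + b *: g2) = F a *: g1 + F b *: g2.
  apply/rowP => k; rewrite !mxE /F FD !exprMn.
  have := congr1 (fun M : 'M[E]_(1,5) => M 0 k) hg1; rewrite mxE => ->.
  by have := congr1 (fun M : 'M[E]_(1,5) => M 0 k) hg2; rewrite mxE => ->.
have hab := e1 a b h1 h2.
have hF : F a + F b * tau = 0.
  by apply: e1; rewrite -hmap Fsum // ?h1 ?h2 F0.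
have ha : a = - (b * tau) by apply/eqP; rewrite -subr_eq0 opprK hab.
move: hF; rewrite ha FN FM => /eqP.
have -> : - (F b * F tau) + F b * tau = F b * (tau - F tau) by ring.
rewrite mulf_eq0 subr_eq0 (eq_sym tau) /F (negbTE Ftau) orbF.
rewrite expf_eq0 => /andP [_ /eqP b0].
by move: vn0; rewrite ha b0 mul0r oppr0 !scale0r addr0 eqxx.
Qed.

Arguments key {E q tau f finf f0 g1 g2 w}.

Lemma frob_setup (q : nat) (E : finFieldType) (tau : E) :
  #|E| = (q ^ 2)%N -> (#|E|.-1).-primitive_root tau ->
  [/\ (0 < q)%N, (forall x y : E, (x + y) ^+ q = x ^+ q + y ^+ q) & tau ^+ q != tau].
Proof.
move=> hcard hprim.
have hc1 := card_finNzRing_gt1 E.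
have q2 : (1 < q)%N by move: hc1; rewrite hcard; case: (q) => [|[|]].
have q0 : (0 < q)%N by apply: ltn_trans q2.
have [p pp pc] := finPcharP E.
have hEp : #|E| = (p ^ logn p #|E|)%N := card_pprimeChar pc.
have hq : [pchar E].-nat q.
  apply/pnatP => // r pr rq.
  have : (r %| #|E|)%N by rewrite hcard expnS dvdn_mulr.
  rewrite hEp Euclid_dvdX // => /andP [rp _].
  by move: rp; rewrite dvdn_prime2 // => /eqP ->.
split => //.
  by move=> x y; apply: exprDn_pchar.
apply/negP => /eqP ht.
have tn0 : tau != 0.
  apply/negP => /eqP t0'; move: (prim_expr_order hprim); rewrite t0' expr0n hcard.
  have -> : ((q ^ 2).-1 == 0)%N = false by apply/negbTE; rewrite -lt0n; nia.
  by move/eqP; rewrite eq_sym oner_eq0.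
have h1 : tau ^+ q.-1 = 1.
  apply: (mulIf tn0); rewrite mul1r -exprSr prednK //.
have := prim_order_dvd hprim q.-1; rewrite h1 eqxx hcard.
move=> /dvdn_leq H; have : (0 < q.-1)%N by lia.
move=> /H; nia.
Qed.

Lemma part2 (q : nat) (E : finFieldType) (tau : E)
  (f : 'I_3 -> 'I_3 -> E) (finf f0 : 'I_5 -> 'I_5 -> E) :
  (0 < q)%N -> (forall x y : E, (x + y) ^+ q = x ^+ q + y ^+ q) -> tau ^+ q != tau ->
  Fq_coeffs q finf -> Fq_coeffs q f0 ->
  (forall x : 'rV[E]_5, qform f (bb_sub tau x) = qform finf x + tau * qform f0 x) ->
  (qform f (vec3 1 0 0) != 0 ->
     disjoint_from_QQ (spread_inf1 E) (spread_inf2 E) finf f0).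
Proof.
move=> q0 FD Ftau hfi hf0 hf.
have F1 : (1 : E) ^+ q = 1 by rewrite expr1n.
have F0 : (0 : E) ^+ q = 0 by rewrite expr0n gtn_eqF.
move=> hn; refine (key FD q0 Ftau hfi hf0 hf _ _ _ hn).
  + move=> a b; apply/rowP => k; rewrite !mxE.
    case: k => [[|[|[|k]]] hk] //=; rewrite ?mxE /= ?inordK //=; ring.
  + apply/rowP => k; rewrite !mxE.
    case: k => [[|[|[|[|[|k]]]]] hk]; simpl; first [ exact: F1 | exact: F0 | by rewrite nth_nil F0 ].
  + apply/rowP => k; rewrite !mxE.
    case: k => [[|[|[|[|[|k]]]]] hk]; simpl; first [ exact: F1 | exact: F0 | by rewrite nth_nil F0 ].
Qed.
Lemma part1 (q : nat) (E : finFieldType) (tau t0 t1 : E)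
  (f : 'I_3 -> 'I_3 -> E) (finf f0 : 'I_5 -> 'I_5 -> E) :
  (0 < q)%N -> (forall x y : E, (x + y) ^+ q = x ^+ q + y ^+ q) -> tau ^+ q != tau ->
  in_Fq q t0 -> in_Fq q t1 -> tau ^+ 2 = t1 * tau + t0 ->
  Fq_coeffs q finf -> Fq_coeffs q f0 ->
  (forall x : 'rV[E]_5, qform f (bb_sub tau x) = qform finf x + tau * qform f0 x) ->
  (forall d0 d1 : E, in_Fq q d0 -> in_Fq q d1 ->
     qform f (vec3 (d0 + d1 * tau) 1 0) != 0 ->
     disjoint_from_QQ (spread_gen1 d0 d1) (spread_gen2 t0 t1 d0 d1) finf f0).
Proof.
move=> q0 FD Ftau ht0 ht1 htau hfi hf0 hf.
have F1 : (1 : E) ^+ q = 1 by rewrite expr1n.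
have F0 : (0 : E) ^+ q = 0 by rewrite expr0n gtn_eqF.
move=> d0 d1 hd0 hd1 hn.
have e1 : forall a b : E, a * d0 + b * (t0 * d1) + (a * d1 + b * (d0 + t1 * d1)) * tau =
  (a + b * tau) * (d0 + d1 * tau).
  move=> a b; have -> : t0 = tau ^+ 2 - t1 * tau by rewrite htau; ring.
  ring.
refine (key FD q0 Ftau hfi hf0 hf _ _ _ hn).
  + move=> a b; apply/rowP => k; rewrite !mxE.
    case: k => [[|[|[|k]]] hk]; rewrite ?mxE /= ?inordK //; rewrite /=.
    * ring.
    * ring.
  + apply/rowP => k; rewrite !mxE.
    case: k => [[|[|[|[|[|k]]]]] hk]; simpl; first [ exact: F1 | exact: F0 | exact: hd0 | exact: hd1 | by rewrite nth_nil F0 ].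
  + apply/rowP => k; rewrite !mxE.
    case: k => [[|[|[|[|[|k]]]]] hk]; simpl.
    * by rewrite exprMn ht0 hd1.
    * by rewrite FD exprMn ht1 hd0 hd1.
    * exact: F0.
    * exact: F1.
    * exact: F0.
    * by rewrite nth_nil F0.
Qed.

Theorem corollary4p4 (q : nat) (E : finFieldType) (tau t0 t1 : E)
  (f : 'I_3 -> 'I_3 -> E) (finf f0 : 'I_5 -> 'I_5 -> E) :
  #|E| = (q ^ 2)%N ->
  (#|E|.-1).-primitive_root tau ->
  in_Fq q t0 -> in_Fq q t1 -> tau ^+ 2 = t1 * tau + t0 ->
  nonsingular_qform f ->
  Fq_coeffs q finf -> Fq_coeffs q f0 ->
  (forall x : 'rV[E]_5, qform f (bb_sub tau x) = qform finf x + tau * qform f0 x) ->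
  (forall d0 d1 : E, in_Fq q d0 -> in_Fq q d1 ->
     qform f (vec3 (d0 + d1 * tau) 1 0) != 0 ->
     disjoint_from_QQ (spread_gen1 d0 d1) (spread_gen2 t0 t1 d0 d1) finf f0)
  /\
  (qform f (vec3 1 0 0) != 0 ->
     disjoint_from_QQ (spread_inf1 E) (spread_inf2 E) finf f0).
Proof.
move=> hcard hprim ht0 ht1 htau _ hfi hf0 hf.
have [q0 FD Ftau] := @frob_setup q E tau hcard hprim.
split.
- exact: (@part1 q E tau t0 t1 f finf f0 q0 FD Ftau ht0 ht1 htau hfi hf0 hf).
- exact: (@part2 q E tau f finf f0 q0 FD Ftau hfi hf0 hf).
Qed.
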